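(* Fix a constant $\Delta$. There is no LCL problem on general graphs of maximum degree at most $\Delta$ with mending radius between $\omega(1)$ and $o(\log n)$: if such an LCL problem $\Pi$ is $T$-mendable for some function $T$ with $T(n)=o(\log n)$, then $\Pi$ is $T'$-mendable for some constant function $T'$.
   Context: A locally verifiable problem $\Pi$ on a graph family $\mathcal{G}$ is given by a set $\Sigma$ of input labels, a set $\Gamma$ of output labels and a verifier $\psi$ with verification radius $r$: $\psi(G,\lambda,v)\in\{\text{happy},\text{unhappy}\}$ depends only on the radius-$r$ neighborhood of $v$ (structure, inputs and outputs, up to isomorphism); $\lambda:V\to\Gamma$ is a solution if $\psi$ is happy everywhere. $\Pi$ is an LCL problem if $\Sigma,\Gamma$ are finite and all graphs in $\mathcal{G}$ have maximum degree bounded by a constant. Partial labelings are maps $\lambda:V\to\Gamma\cup\{\bot\}$; the relaxed verifier $\psi^*$ is happy at $v$ if some node within distance $r$ of $v$ has label $\bot$, and otherwise $\psi^*(G,\lambda,v)=\psi(G,\lambda',v)$ for any $\lambda':V\to\Gamma$ agreeing with $\lambda$ on the radius-$r$ neighborhood of $v$; $\psi^*$ accepts $\lambda$ if happy everywhere. Given $\lambda$ accepted by $\psi^*$ and node $v$, a $t$-mend of $\lambda$ at $v$ is a partial labeling $\mu$ accepted by $\psi^*$ with $\mu(v)\neq\bot$, $\mu(u)=\bot\Rightarrow\lambda(u)=\bot$, and $\mu(u)\neq\lambda(u)\Rightarrow\mathrm{dist}(u,v)\le t$. A verifier is $T$-mendable if for every $G\in\mathcal{G}$ with $n$ nodes,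 every $\lambda$ accepted by $\psi^*$ and every node $v$, a $T(n)$-mend at $v$ exists; $\Pi$ is $T$-mendable if some radius-$r$ verifier for $\Pi$ (accepting exactly the solutions of $\Pi$) is $T$-mendable. *)

(* Defs.v *)
From mathcomp Require Import all_boot.
Set Implicit Arguments. Unset Strict Implicit. Unset Printing Implicit Defensive.

Definition in_family (Delta n : nat) (e : rel 'I_n) : Prop :=
  symmetric e /\ irreflexive e /\ (forall v : 'I_n, #|[set u | e v u]| <= Delta).

Fixpoint within (n : nat) (e : rel 'I_n) (k : nat) (u v : 'I_n) : bool :=
  match k with
  | 0 => u == v
  | k'.+1 => within e k' u v || [exists w, within e k' u w && e w v]
  end.

(* A candidate verifier: for every graph, input labelling, (total) output
   labelling and node, answers happy (true) / unhappy (false). *)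
Definition verifier (Sigma Gamma : finType) : Type :=
  forall n : nat, rel 'I_n -> ('I_n -> Sigma) -> ('I_n -> Gamma) -> 'I_n -> bool.

Definition ball_iso (Sigma Gamma : finType) (r : nat)
  (n : nat) (e : rel 'I_n) (inp : 'I_n -> Sigma) (lab : 'I_n -> Gamma) (v : 'I_n)
  (n' : nat) (e' : rel 'I_n') (inp' : 'I_n' -> Sigma) (lab' : 'I_n' -> Gamma) (v' : 'I_n')
  : Prop :=
  exists (f : 'I_n -> 'I_n') (g : 'I_n' -> 'I_n),
    [/\ f v = v',
        (forall u, within e r v u -> within e' r v' (f u) /\ g (f u) = u),
        (forall u', within e' r v' u' -> within e r v (g u') /\ f (g u') = u'),
        (forall u w, within e r v u -> within e r v w -> e' (f u) (f w) = e u w) &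
        (forall u, within e r v u -> inp' (f u) = inp u /\ lab' (f u) = lab u)].

Definition is_verifier (Sigma Gamma : finType) (Delta r : nat)
  (psi : verifier Sigma Gamma) : Prop :=
  forall n (e : rel 'I_n) inp lab v n' (e' : rel 'I_n') inp' lab' v',
    in_family Delta e -> in_family Delta e' ->
    ball_iso r e inp lab v e' inp' lab' v' ->
    psi n e inp lab v = psi n' e' inp' lab' v'.

Definition same_solutions (Sigma Gamma : finType) (Delta : nat)
  (psi psi' : verifier Sigma Gamma) : Prop :=
  forall n (e : rel 'I_n) inp (lab : 'I_n -> Gamma), in_family Delta e ->
    ((forall v, psi n e inp lab v) <-> (forall v, psi' n e inp lab v)).

(* Relaxed verifier psi* on partial labellings (None = bottom). *)
Definition relaxed (Sigma Gamma : finType) (r : nat) (psi : verifier Sigma Gamma)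
  (n : nat) (e : rel 'I_n) (inp : 'I_n -> Sigma) (mu : 'I_n -> option Gamma)
  (v : 'I_n) : Prop :=
  (exists u, within e r v u /\ mu u = None) \/
  (forall lab : 'I_n -> Gamma,
     (forall u, within e r v u -> mu u = Some (lab u)) -> psi n e inp lab v).

Definition relaxed_accepts (Sigma Gamma : finType) (r : nat) (psi : verifier Sigma Gamma)
  (n : nat) (e : rel 'I_n) (inp : 'I_n -> Sigma) (mu : 'I_n -> option Gamma) : Prop :=
  forall v, relaxed r psi e inp mu v.

Definition is_mend (Sigma Gamma : finType) (r : nat) (psi : verifier Sigma Gamma)
  (n : nat) (e : rel 'I_n) (inp : 'I_n -> Sigma) (mu : 'I_n -> option Gamma)
  (v : 'I_n) (t : nat) (mu' : 'I_n -> option Gamma) : Prop :=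
  [/\ relaxed_accepts r psi e inp mu',
      mu' v <> None,
      (forall u, mu' u = None -> mu u = None) &
      (forall u, mu' u <> mu u -> within e t v u)].

Definition verifier_mendable (Sigma Gamma : finType) (Delta r : nat)
  (psi : verifier Sigma Gamma) (T : nat -> nat) : Prop :=
  forall n (e : rel 'I_n) inp (mu : 'I_n -> option Gamma),
    in_family Delta e -> relaxed_accepts r psi e inp mu ->
    forall v, exists mu', is_mend r psi e inp mu v (T n) mu'.

Definition problem_mendable (Sigma Gamma : finType) (Delta r : nat)
  (psi : verifier Sigma Gamma) (T : nat -> nat) : Prop :=
  exists psi' : verifier Sigma Gamma,
    [/\ is_verifier Delta r psi', same_solutions Delta psi psi' &
        verifier_mendable Delta r psi' T].

Definition little_o_log (T : nat -> nat) : Prop :=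
  forall k, 0 < k -> exists N, forall n, N <= n -> k * T n <= trunc_log 2 n.

(* Main.v *)
Require Import Defs.
From mathcomp Require Import all_boot.
From mathcomp Require Import zify.
Set Implicit Arguments. Unset Strict Implicit. Unset Printing Implicit Defensive.

Section Within.
Variables (n : nat) (e : rel 'I_n).

Lemma within_refl k u : within e k u u.
Proof. by elim: k => [|k IH] /=; rewrite ?eqxx ?IH. Qed.

Lemma within_S k u w : within e k u w -> within e k.+1 u w.
Proof. by move=> h /=; rewrite h. Qed.

Lemma within_mono k k' u w : within e k u w -> k <= k' -> within e k' u w.
Proof.
move=> h; elim: k' => [|k' IH]; first by rewrite leqn0 => /eqP <-.
rewrite leq_eqVlt; case/orP=> [/eqP <- //|hk].
by apply: within_S; apply: IH.
Qed.

Lemma within_edge x y : e x y -> within e 1 x y.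
Proof. by move=> h /=; apply/orP; right; apply/existsP; exists x; rewrite eqxx h. Qed.

Lemma within_trans a b u x y :
  within e a u x -> within e b x y -> within e (a + b) u y.
Proof.
move=> hux; elim: b y => [|b IH] y /=.
  by move/eqP=> <-; rewrite addn0.
rewrite addnS /=; case/orP=> [h|/existsP [w /andP [hw ewy]]].
  by rewrite IH.
by apply/orP; right; apply/existsP; exists w; rewrite IH.
Qed.

Lemma within_sym k u w : symmetric e -> within e k u w -> within e k w u.
Proof.
move=> sym; elim: k u w => [|k IH] u w /=.
  by rewrite eq_sym.
case/orP=> [h|/existsP [x /andP [hx exw]]].
  by rewrite IH.
have h1 : within e 1 w x by apply: within_edge; rewrite sym.
by have := within_trans h1 (IH _ _ hx); rewrite add1n.
Qed.

Lemma card_bigcup_le (s : seq 'I_n) (F : 'I_n -> {set 'I_n}) D :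
  (forall x, #|F x| <= D) -> #|\bigcup_(x <- s) F x| <= D * size s.
Proof.
move=> hF; elim: s => [|x s IH]; first by rewrite big_nil cards0.
rewrite big_cons /= mulnS.
apply: leq_trans (leq_card_setU _ _).1 _.
exact: leq_add.
Qed.

Lemma mem_bigcup_seq (s : seq 'I_n) (F : 'I_n -> {set 'I_n}) x u :
  x \in s -> u \in F x -> u \in \bigcup_(y <- s) F y.
Proof.
move=> hx hu; elim: s hx => [|y s IH] //; rewrite in_cons big_cons inE.
by case/orP=> [/eqP <-|/IH ->]; rewrite ?hu ?orbT.
Qed.

Lemma ball_card Delta v k :
  (forall x : 'I_n, #|[set u | e x u]| <= Delta) ->
  #|[set u | within e k v u]| <= Delta.+1 ^ k.
Proof.
move=> hD; elim: k => [|k IH].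
  rewrite expn0 (_ : [set u | within e 0 v u] = [set v]) ?cards1 //.
  by apply/setP=> u; rewrite !inE eq_sym.
set Bk := [set u | within e k v u].
have sub : [set u | within e k.+1 v u] \subset
           Bk :|: \bigcup_(x <- enum Bk) [set u | e x u].
  apply/subsetP=> u; rewrite !inE /=; case/orP=> [->//|/existsP [w /andP [hw ewu]]].
  apply/orP; right; apply: (mem_bigcup_seq (x := w)).
    by rewrite mem_enum inE.
  by rewrite inE.
apply: leq_trans (subset_leq_card sub) _.
apply: leq_trans (leq_card_setU _ _).1 _.
have hh := @card_bigcup_le (enum Bk) (fun x => [set u | e x u]) Delta hD.
rewrite -cardE in hh.
have h2 := leq_add (leqnn #|Bk|) hh. apply: (leq_trans h2).
idtac.
rewrite expnS.
have := IH; set b := #|Bk|; move=> hb.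
move: hb; set P := _ ^ k; nia.
Qed.

End Within.

Lemma transfer (Sigma Gamma : finType) Delta r (psi : verifier Sigma Gamma) :
  is_verifier Delta r psi ->
  forall n (e : rel 'I_n) (inp : 'I_n -> Sigma) (mu : 'I_n -> option Gamma) x
         n' (e' : rel 'I_n') (inp' : 'I_n' -> Sigma) (mu' : 'I_n' -> option Gamma)
         (f : 'I_n -> 'I_n') (g : 'I_n' -> 'I_n),
  in_family Delta e -> in_family Delta e' ->
  (forall u, within e r x u -> within e' r (f x) (f u) /\ g (f u) = u) ->
  (forall u', within e' r (f x) u' -> within e r x (g u') /\ f (g u') = u') ->
  (forall u w, within e r x u -> within e r x w -> e' (f u) (f w) = e u w) ->
  (forall u, within e r x u -> inp' (f u) = inp u /\ mu' (f u) = mu u) ->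
  relaxed r psi e' inp' mu' (f x) <-> relaxed r psi e inp mu x.
Proof.
move=> hv n e inp mu x n' e' inp' mu' f g fe fe' h1 h2 h3 h4; split.
- case=> [[u' [hu' hn]]|H].
    left; exists (g u'); have [hw hf] := h2 _ hu'; split=> //.
    by have [_ <-] := h4 _ hw; rewrite hf.
  right=> lab hlab.
  have iso : ball_iso r e inp lab x e' inp' (fun u' => lab (g u')) (f x).
    exists f, g; split=> // u hu.
    by have [_ ->] := h1 _ hu; have [-> _] := h4 _ hu.
  rewrite (hv _ _ _ _ _ _ _ _ _ _ fe fe' iso); apply: H => u' hu'.
  have [hw hf] := h2 _ hu'; rewrite -{1}hf.
  by have [_ ->] := h4 _ hw; exact: hlab.
- case=> [[u [hu hn]]|H].
    left; exists (f u); have [hw _] := h1 _ hu; split=> //.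
    by have [_ ->] := h4 _ hu.
  right=> lab' hlab'.
  have iso : ball_iso r e inp (fun u => lab' (f u)) x e' inp' lab' (f x).
    exists f, g; split=> // u hu.
    by have [-> _] := h4 _ hu.
  rewrite -(hv _ _ _ _ _ _ _ _ _ _ fe fe' iso); apply: H => u hu.
  have [_ <-] := h4 _ hu; apply: hlab'.
  by have [] := h1 _ hu.
Qed.

Lemma relaxed_ext (Sigma Gamma : finType) r (psi : verifier Sigma Gamma) n
  (e : rel 'I_n) inp (mu1 mu2 : 'I_n -> option Gamma) u :
  (forall w, within e r u w -> mu1 w = mu2 w) ->
  relaxed r psi e inp mu1 u -> relaxed r psi e inp mu2 u.
Proof.
move=> h; case=> [[w [hw hn]]|H].
  by left; exists w; rewrite -h.
right=> lab hlab; apply: H => w hw; rewrite h //; exact: hlab.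
Qed.

Section Embed.
Variables (Delta n n0 : nat) (e : rel 'I_n) (v : 'I_n) (R : nat) (d : 'I_n0).
Definition eB := [set u | within e R v u].
Hypothesis hm : #|eB| <= n0.
Definition ef (u : 'I_n) : 'I_n0 := insubd d (index u (enum eB)).
Definition eg (i : 'I_n0) : 'I_n := nth v (enum eB) i.
Definition ee : rel 'I_n0 :=
  fun i j => [&& i < #|eB|, j < #|eB| & e (eg i) (eg j)].

Lemma inB a u : within e a v u -> a <= R -> u \in eB.
Proof. by move=> h ha; rewrite inE; apply: within_mono h ha. Qed.

Lemma ef_val u : u \in eB -> val (ef u) = index u (enum eB).
Proof.
move=> hu; rewrite /ef val_insubd.
have -> : index u (enum eB) < n0.
  by apply: leq_trans hm; rewrite cardE index_mem mem_enum.
by [].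
Qed.

Lemma egf u : u \in eB -> eg (ef u) = u.
Proof. by move=> hu; rewrite /eg ef_val // nth_index // mem_enum. Qed.

Lemma ef_lt u : u \in eB -> ef u < #|eB|.
Proof. by move=> hu; rewrite ef_val // cardE index_mem mem_enum. Qed.

Lemma efg (i : 'I_n0) : i < #|eB| -> ef (eg i) = i.
Proof.
move=> hi; apply: val_inj; rewrite /ef val_insubd index_uniq ?enum_uniq -?cardE //.
by rewrite ltn_ord.
Qed.

Lemma eg_in (i : 'I_n0) : i < #|eB| -> eg i \in eB.
Proof. by move=> hi; rewrite /eg -mem_enum mem_nth // -cardE. Qed.

Lemma ee_family : in_family Delta e -> in_family Delta ee.
Proof.
case=> sym [irr deg]; split; [|split].
- by move=> i j; rewrite /ee andbCA sym.
- by move=> i; rewrite /ee irr !andbF.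
move=> i; case hi: (i < #|eB|); last first.
  rewrite (_ : [set j | ee i j] = set0) ?cards0 //.
  by apply/setP=> j; rewrite !inE /ee hi.
have inj : {in [set j | ee i j] &, injective eg}.
  move=> j k; rewrite !inE /ee => /and3P [_ hj _] /and3P [_ hk _] h.
  by rewrite -(efg hj) -(efg hk) h.
rewrite -(card_in_imset inj); apply: leq_trans (deg (eg i)).
apply: subset_leq_card; apply/subsetP=> u /imsetP [j].
by rewrite inE /ee => /and3P [_ _ h] ->; rewrite inE.
Qed.

Lemma within_back k (i j : 'I_n0) : within ee k i j ->
  (i == j) || [&& i < #|eB|, j < #|eB| & within e k (eg i) (eg j)].
Proof.
elim: k j => [|k IH] j /=; first by move->.
case/orP=> [h|/existsP [w /andP [hw /and3P [hwm hjm ewj]]]].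
  by case/orP: (IH _ h) => [->//|/and3P [a b c]]; rewrite a b c /= ?orbT.
case/orP: (IH _ hw) => [/eqP ->|/and3P [a b c]].
  apply/orP; right; rewrite hwm hjm /=.
  exact: (within_mono (within_edge ewj) (isT : 1 <= k.+1)).
apply/orP; right; rewrite a hjm /=; apply/orP; right.
by apply/existsP; exists (eg w); rewrite c.
Qed.

Lemma within_fwd a k x y : within e a v x -> within e k x y -> a + k <= R ->
  within ee k (ef x) (ef y).
Proof.
move=> hx; elim: k y => [|k IH] y; first by move/eqP->; rewrite /= eqxx.
move=> hy hR; have hR' : a + k <= R by apply: leq_trans hR; rewrite addnS.
move: (hy) => /= /orP [h|/existsP [w /andP [hw ewy]]].
  by rewrite (IH _ h hR').
apply/orP; right; apply/existsP; exists (ef w); rewrite (IH _ hw hR') /=.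
have wB : w \in eB by apply: (inB (within_trans hx hw)).
have yB : y \in eB by apply: (inB (within_trans hx hy)).
by rewrite /ee !ef_lt // !egf.
Qed.

Lemma emb_transfer (Sigma Gamma : finType) (psi : verifier Sigma Gamma) r
  (inp : 'I_n -> Sigma) (mu : 'I_n -> option Gamma) (mu0 : 'I_n0 -> option Gamma) x a :
  is_verifier Delta r psi -> in_family Delta e -> within e a v x -> a + r <= R ->
  (forall u, within e r x u -> mu0 (ef u) = mu u) ->
  relaxed r psi ee (fun i => inp (eg i)) mu0 (ef x) <-> relaxed r psi e inp mu x.
Proof.
move=> hv fam hx har hmu.
have xB : x \in eB by apply: (inB hx); apply: leq_trans har; apply: leq_addr.
have uB u : within e r x u -> u \in eB by move=> hu; apply: (inB (within_trans hx hu)).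
apply: (transfer hv fam (ee_family fam) (g := eg)).
- by move=> u hu; split; [exact: within_fwd hx hu har | apply: egf; apply: uB].
- move=> u' hu'; case/orP: (within_back hu') => [/eqP <-|/and3P [_ hu'm hw]].
    by rewrite egf //; split; [exact: within_refl|].
  by rewrite egf // in hw; split => //; exact: efg hu'm.
- by move=> u w hu hw; rewrite /ee !ef_lt ?egf //; apply: uB.
- by move=> u hu; rewrite egf ?hmu //; apply: uB.
Qed.

End Embed.

Theorem corollary8p6 :
  forall (Delta : nat) (Sigma Gamma : finType) (r : nat) (psi : verifier Sigma Gamma),
    is_verifier Delta r psi ->
    forall T : nat -> nat, little_o_log T ->
    problem_mendable Delta r psi T ->
    exists c : nat, problem_mendable Delta r psi (fun _ => c).
Proof.
move=> Delta Sigma Gamma r psi hpsi T hT [psi' [hv' hsame hmend]].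
set b := Delta.+1.
have [N hN] := hT (2 * b) (ltn0Sn _).
set n0 := maxn N (2 ^ (6 * r * b)).
have hn0 : 2 * b * T n0 <= trunc_log 2 n0 by apply: hN; rewrite leq_maxl.
have hL : 6 * r * b <= trunc_log 2 n0.
  by apply: trunc_log_max => //; rewrite leq_maxr.
have hpos : 0 < n0.
  by apply: leq_trans (leq_maxr _ _); rewrite expn_gt0.
set c := T n0.
set R := c + 3 * r.
have hbR : b ^ R <= n0.
  apply: leq_trans (_ : 2 ^ (b * R) <= n0).
    rewrite expnM; case: (posnP R) => [->|Rp]; first by rewrite !expn0.
    by rewrite leq_exp2r // ltnW // ltn_expl.
  apply: leq_trans (trunc_logP (isT : 1 < 2) hpos).
  apply: leq_pexp2l => //.
  move: hn0 hL; rewrite /R; set L := trunc_log 2 n0; nia.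
exists c, psi'; split => //.
move=> n e inp mu fam acc v.
pose d : 'I_n0 := Ordinal hpos.
have hm : #|eB e v R| <= n0.
  apply: leq_trans hbR; apply: ball_card; by case: fam => _ [].
pose f := ef e v R d.
pose g := @eg n n0 e v R.
pose H := @ee n n0 e v R.
pose inp0 := fun i => inp (g i).
pose mu0 := fun i : 'I_n0 =>
  if (i < #|eB e v R|) && within e (c + 2 * r) v (g i) then mu (g i) else None.
have famH : in_family Delta H by exact: (ee_family v R d fam).
have inBc a u : within e a v u -> a <= c + 2 * r -> u \in eB e v R.
  move=> hu ha; apply: (inB hu); apply: leq_trans ha _; rewrite /R; lia.
have accH : relaxed_accepts r psi' H inp0 mu0.
  move=> i; case hi: ((i < #|eB e v R|) && within e (c + 2 * r) v (g i)); last first.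
    by left; exists i; split; [exact: within_refl | rewrite /mu0 hi].
  move/andP: hi => [him hx]; set x := g i.
  have <- : f x = i by apply: efg.
  case: (boolP [exists w, within e r x w && ~~ within e (c + 2 * r) v w]).
    case/existsP=> w /andP [hw hnw]; left; exists (f w); split.
      by apply: (within_fwd d hm hx hw); rewrite /R; lia.
    have wB : w \in eB e v R by apply: (inB (within_trans hx hw)); rewrite /R; lia.
    by rewrite /mu0 /f /g egf // (negbTE hnw) andbF.
  move/existsPn=> hall.
  have har : c + 2 * r + r <= R by rewrite /R; lia.
  have hmu : forall u, within e r x u -> mu0 (f u) = mu u.
    move=> u hu; have := hall u; rewrite hu /= negbK => hu2.
    by rewrite /mu0 /f /g egf ?ef_lt ?hu2 //; apply: inBc hu2 _.
  apply: (proj2 (emb_transfer hm inp hv' fam hx har hmu)).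
  exact: acc.
have [mu' [acc' hv0 hnone hch]] := hmend n0 H inp0 mu0 famH accH (f v).
exists (fun u => if within e c v u then mu' (f u) else mu u); split.
- move=> u; case hu: (within e (c + r) v u).
    have har : c + r + r <= R by rewrite /R; lia.
    have hmu : forall w, within e r u w ->
       mu' (f w) = (fun u => if within e c v u then mu' (f u) else mu u) w.
      move=> w hw /=; case hcw: (within e c v w) => //.
      have hwB : within e (c + 2 * r) v w.
        by apply: within_mono (within_trans hu hw) _; lia.
      case: (eqVneq (mu' (f w)) (mu0 (f w))) => [->|/eqP hne].
        by rewrite /mu0 /f /g ef_lt ?egf ?hwB //; apply: inBc hwB _.
      have := hch _ hne; move/within_back.
      have vB : v \in eB e v R by apply: (inBc 0) => //; exact: within_refl.
      have wB : w \in eB e v R by apply: inBc hwB _.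
      case/orP=> [/eqP hvw|/and3P [_ _ hw2]].
        have : g (f v) = g (f w) by rewrite hvw.
        by rewrite /g /f !egf // => hvw'; move: hcw; rewrite -hvw' within_refl.
      by move: hw2; rewrite /g /f !egf // hcw.
    apply: (proj1 (emb_transfer hm inp hv' fam hu har hmu)).
    exact: acc'.
  apply: (relaxed_ext (mu1 := mu)); last exact: acc.
  move=> w hw; case hcw: (within e c v w) => //.
  have := within_trans hcw (within_sym (proj1 fam) hw); rewrite hu //.
- by rewrite within_refl.
- move=> u; case: ifP => // hu /hnone.
  have hu2 : within e (c + 2 * r) v u by apply: within_mono hu _; lia.
  by rewrite /mu0 /f /g ef_lt ?egf ?hu2 //; apply: inBc hu2 _.
- by move=> u; case: ifP.
Qed.
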